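(* Let $X,Y$ be metric spaces, $U\subset X$, $V\subset Y$ open sets, and $F:X\rightrightarrows Y$ a set-valued mapping whose graph is complete in the product metric. Let $r>0$ and suppose there is $\xi>0$ such that for every $x\in U$, $y\in V$, $v\in F(x)$ with $0<d(y,v)<r\,m(x)$ there is $(u,w)\in\operatorname{gr}F$, $(u,w)\ne(x,v)$, with $$d(y,w)\le d(y,v)-r\,d_\xi\big((x,v),(u,w)\big).$$ Then $F$ is Milyutin regular on $U\times V$ and $\operatorname{sur}_m F(U|V)\ge r$. Conversely, if $F$ is Milyutin regular on $U\times V$, then for every $r$ with $0<r<\operatorname{sur}_mF(U|V)$, every $\xi\in(0,r^{-1})$ and every $x\in U$, $v\in F(x)$, $y\in V$ with $0<d(y,v)<r\,m(x)$, there is $(u,w)\in\operatorname{gr}F$, $(u,w)\neq(x,v)$, satisfying the displayed inequality.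
   Context: $m(x)=d(x,X\setminus U)$ (with $d(x,\emptyset)=+\infty$). $d_\xi((x,v),(x',v'))=\max\{d(x,x'),\xi d(v,v')\}$. $B(A,s)=\{y:\exists a\in A,\ d(y,a)\le s\}$, $B(x,t)$ the closed ball. $F$ is Milyutin regular on $U\times V$ if there is $r>0$ with $B(F(x),rt)\cap V\subset F(B(x,t))$ for all $x\in U$, $0\le t<m(x)$; $\operatorname{sur}_mF(U|V)$ is the supremum of such $r$ ($0$ if none). *)

(* Defs.v *)
From Stdlib Require Import Reals.
Open Scope R_scope.

Record MetricSpace := {
  carrier :> Type;
  mdist : carrier -> carrier -> R;
  dist_nonneg : forall x y, 0 <= mdist x y;
  dist_eq0 : forall x y, mdist x y = 0 <-> x = y;
  dist_sym : forall x y, mdist x y = mdist y x;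
  dist_tri : forall x y z, mdist x z <= mdist x y + mdist y z
}.
Arguments mdist {_} _ _.

Definition is_open {X : MetricSpace} (U : X -> Prop) : Prop :=
  forall x, U x -> exists eps, 0 < eps /\ forall y, mdist x y < eps -> U y.

(* t < m(x), where m(x) = d(x, X \ U) = inf_{z notin U} d(x,z), inf of empty = +oo *)
Definition lt_m {X : MetricSpace} (U : X -> Prop) (x : X) (t : R) : Prop :=
  exists s, t < s /\ forall z, ~ U z -> s <= mdist x z.

(* t < r * m(x)  (with r*(+oo) = +oo for r > 0) *)
Definition lt_rm {X : MetricSpace} (U : X -> Prop) (r : R) (x : X) (t : R) : Prop :=
  exists s, t < r * s /\ forall z, ~ U z -> s <= mdist x z.

(* set-valued map F : X ⇉ Y, encoded by its graph: F x y means y ∈ F(x) *)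
Definition setmap (X Y : MetricSpace) := X -> Y -> Prop.

Definition dprod {X Y : MetricSpace} (p q : X * Y) : R :=
  Rmax (mdist (fst p) (fst q)) (mdist (snd p) (snd q)).

Definition dxi {X Y : MetricSpace} (xi : R) (p q : X * Y) : R :=
  Rmax (mdist (fst p) (fst q)) (xi * mdist (snd p) (snd q)).

Definition graph_complete {X Y : MetricSpace} (F : setmap X Y) : Prop :=
  forall s : nat -> X * Y,
    (forall n, F (fst (s n)) (snd (s n))) ->
    (forall eps, 0 < eps -> exists N, forall n m, (N <= n)%nat -> (N <= m)%nat ->
        dprod (s n) (s m) < eps) ->
    exists p : X * Y, F (fst p) (snd p) /\
      (forall eps, 0 < eps -> exists N, forall n, (N <= n)%nat -> dprod (s n) p < eps).

(* B(F(x), r t) ∩ V ⊆ F(B(x,t)) for all x ∈ U, 0 <= t < m(x) *)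
Definition milyutin_mod {X Y : MetricSpace} (F : setmap X Y)
    (U : X -> Prop) (V : Y -> Prop) (r : R) : Prop :=
  forall x, U x -> forall t, 0 <= t -> lt_m U x t ->
    forall y, V y -> (exists v, F x v /\ mdist y v <= r * t) ->
      exists u, mdist u x <= t /\ F u y.

Definition milyutin_regular {X Y : MetricSpace} (F : setmap X Y)
    (U : X -> Prop) (V : Y -> Prop) : Prop :=
  exists r, 0 < r /\ milyutin_mod F U V r.

(* sur_m F (U|V) = sup { r > 0 | milyutin_mod r } (0 if empty, possibly +oo). *)
Definition sur_m_ge {X Y : MetricSpace} (F : setmap X Y)
    (U : X -> Prop) (V : Y -> Prop) (r : R) : Prop :=
  (r <= 0) \/ (forall r', r' < r -> exists s, 0 < s /\ milyutin_mod F U V s /\ r' < s).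

Definition sur_m_gt {X Y : MetricSpace} (F : setmap X Y)
    (U : X -> Prop) (V : Y -> Prop) (r : R) : Prop :=
  (r < 0) \/ (exists s, 0 < s /\ milyutin_mod F U V s /\ r < s).

(* Main.v *)
From Pilot Require Import Defs.
From Stdlib Require Import Reals Lra Lia Classical ClassicalEpsilon.
Import Pilot.Defs.
Open Scope R_scope.
Lemma ekeland (T : Type) (P : T -> Prop) (D : T -> T -> R) (f : T -> R) (r L : R)
 (Dnn : forall p q, 0 <= D p q) (Dsym : forall p q, D p q = D q p)
 (Dtri : forall p q z, D p z <= D p q + D q z) (Dzz : forall p, D p p = 0)
 (D0 : forall p q, D p q = 0 -> p = q)
 (Hc : forall s : nat -> T, (forall n, P (s n)) ->
    (forall eps, 0 < eps -> exists N, forall n m, (N <= n)%nat -> (N <= m)%nat -> D (s n) (s m) < eps) ->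
    exists p, P p /\ forall eps, 0 < eps -> exists N, forall n, (N <= n)%nat -> D (s n) p < eps)
 (fnn : forall p, 0 <= f p) (fL : forall p q, f q <= f p + L * D p q) (Lnn : 0 <= L)
 (rpos : 0 < r) (p0 : T) (Hp0 : P p0) :
 exists pb, P pb /\ f pb + r * D p0 pb <= f p0 /\
   forall q, P q -> f q + r * D pb q <= f pb -> q = pb.
Proof.
  set (Sz := fun z q => P q /\ f q + r * D z q <= f z).
  assert (Srefl : forall z, P z -> Sz z z).
  { intros z Hz; split; auto. rewrite Dzz; lra. }
  assert (Strans : forall z q q', Sz z q -> Sz q q' -> Sz z q').
  { intros z q q' [_ H1] [H2 H3]; split; auto.
    assert (r * D z q' <= r * (D z q + D q q')) by (apply Rmult_le_compat_l; [lra|auto]).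
    lra. }
  assert (step : forall z eps, P z -> 0 < eps -> exists z', Sz z z' /\
             forall q, Sz z' q -> f z' - eps <= f q).
  { intros z eps Hz He.
    set (E := fun x => exists q, Sz z q /\ x = - f q).
    assert (bE : bound E).
    { exists 0; intros x [q [_ ->]]; specialize (fnn q); lra. }
    assert (nE : exists x, E x) by (exists (- f z); exists z; split; auto).
    destruct (completeness E bE nE) as [m [Hub Hlub]].
    assert (exists q, Sz z q /\ m - eps < - f q).
    { apply NNPP; intro Hn.
      assert (m <= m - eps); [|lra].
      apply Hlub; intros x [q [Hq ->]].
      apply Rnot_lt_le; intro Hl; apply Hn; exists q; auto. }
    destruct H as [q [Hq Hlt]]. exists q; split; auto.
    intros q' Hq'.
    assert (E (- f q')) by (exists q'; split; [eapply Strans; eauto|reflexivity]).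
    specialize (Hub _ H); lra. }
  assert (G : forall z n, {z' | P z -> Sz z z' /\
             forall q, Sz z' q -> f z' - / INR (S n) <= f q}).
  { intros z n; apply constructive_indefinite_description.
    destruct (classic (P z)) as [Hz|Hz].
    - assert (0 < / INR (S n)) by (apply Rinv_0_lt_compat, lt_0_INR; lia).
      destruct (step z _ Hz H) as [z' Hz']; exists z'; auto.
    - exists z; intro; contradiction. }
  set (g := fun z n => proj1_sig (G z n)).
  assert (gP : forall z n, P z -> Sz z (g z n) /\
             forall q, Sz (g z n) q -> f (g z n) - / INR (S n) <= f q).
  { intros z n; unfold g; destruct (G z n); simpl; auto. }
  set (s := fix s n := match n with O => p0 | S k => g (s k) k end).
  assert (sS : forall n, s (S n) = g (s n) n) by reflexivity.
  assert (sP : forall n, P (s n)).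
  { induction n; [exact Hp0|]. rewrite sS. apply (gP _ n IHn). }
  assert (sB : forall n k, Sz (s n) (s (n + k)%nat)).
  { intros n k; induction k.
    - rewrite Nat.add_0_r; apply Srefl, sP.
    - rewrite Nat.add_succ_r, sS. eapply Strans; [exact IHk|]. apply gP, sP. }
  assert (sC : forall n q, Sz (s (S n)) q -> r * D (s (S n)) q <= / INR (S n)).
  { intros n q Hq. rewrite sS in *. destruct (gP (s n) n (sP n)) as [_ H2].
    specialize (H2 q Hq). destruct Hq as [_ Hq]. lra. }
  assert (sBle : forall n m, (n <= m)%nat -> Sz (s n) (s m)).
  { intros n m Hnm. replace m with (n + (m - n))%nat by lia. apply sB. }
  assert (arch : forall e, 0 < e -> exists N, r * 0 + / INR (S N) < e).
  { intros e He. destruct (archimed_cor1 e He) as [N [HN HN0]].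
    exists (pred N). replace (S (pred N)) with N by lia. rewrite Rmult_0_r, Rplus_0_l. exact HN. }
  destruct (Hc s sP) as [pb [Ppb Hlim]].
  { intros eps He.
    destruct (arch (r * eps / 2)) as [N HN].
    { apply Rmult_lt_0_compat; [apply Rmult_lt_0_compat|]; lra. }
    exists (S N); intros n m Hn Hm.
    pose proof (sC N _ (sBle _ _ Hn)). pose proof (sC N _ (sBle _ _ Hm)).
    pose proof (Dtri (s n) (s (S N)) (s m)). rewrite (Dsym (s n) (s (S N))) in H1.
    assert (r * D (s n) (s m) < r * eps).
    { assert (r * D (s n) (s m) <= r * (D (s (S N)) (s n) + D (s (S N)) (s m)))
        by (apply Rmult_le_compat_l; lra). lra. }
    apply Rmult_lt_reg_l in H2; lra. }
  assert (sD : forall n, Sz (s n) pb).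
  { intro n; split; auto.
    assert (forall d, 0 < d -> f pb + r * D (s n) pb <= f (s n) + (L + r) * d).
    { intros d Hd. destruct (Hlim d Hd) as [M HM].
      specialize (HM (n + M)%nat ltac:(lia)).
      destruct (sB n M) as [_ H1].
      pose proof (fL (s (n+M)%nat) pb).
      pose proof (Dtri (s n) (s (n+M)%nat) pb).
      assert (r * D (s n) pb <= r * (D (s n) (s (n + M)%nat) + D (s (n + M)%nat) pb))
        by (apply Rmult_le_compat_l; lra).
      assert (L * D (s (n + M)%nat) pb <= L * d)
        by (apply Rmult_le_compat_l; lra).
      assert (r * D (s (n + M)%nat) pb <= r * d)
        by (apply Rmult_le_compat_l; lra).
      lra. }
    apply Rnot_lt_le; intro Hl.
    set (d := (f pb + r * D (s n) pb - f (s n)) / (2 * (L + r))).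
    assert (0 < d) by (apply Rdiv_lt_0_compat; [lra | apply Rmult_lt_0_compat; lra]).
    specialize (H d H0). assert (2 * ((L + r) * d) = f pb + r * D (s n) pb - f (s n)) by (unfold d; field; apply Rgt_not_eq; lra). lra. }
  exists pb; split; auto. split; [exact (proj2 (sD 0%nat))|].
  intros q Pq Hq.
  assert (Sq : Sz pb q) by (split; auto).
  apply eq_sym, D0, Rle_antisym; [|apply Dnn].
  apply Rnot_lt_le; intro Hl.
  destruct (arch (r * D pb q / 2)) as [N HN].
  { apply Rmult_lt_0_compat; [apply Rmult_lt_0_compat|]; lra. }
  pose proof (sC N _ (sD (S N))).
  pose proof (sC N _ (Strans _ _ _ (sD (S N)) Sq)).
  pose proof (Dtri (s (S N)) pb q) as H1'.
  pose proof (Dtri pb (s (S N)) q). rewrite (Dsym pb (s (S N))) in H1.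
  assert (r * D pb q <= r * (D (s (S N)) pb + D (s (S N)) q))
    by (apply Rmult_le_compat_l; lra).
  lra.
Qed.

Lemma rmax_xi_le (a b xi : R) : 0 < xi -> 0 <= a -> 0 <= b ->
  Rmax a (xi * b) <= (1 + xi) * Rmax a b.
Proof.
  intros. pose proof (Rmax_l a b). pose proof (Rmax_r a b).
  apply Rmax_lub; [nra|nra].
Qed.

Lemma rmax_le_xi (a b xi : R) : 0 < xi -> 0 <= a -> 0 <= b ->
  Rmax a b <= (1 + / xi) * Rmax a (xi * b).
Proof.
  intros. pose proof (Rmax_l a (xi*b)). pose proof (Rmax_r a (xi*b)).
  assert (0 < / xi) by (apply Rinv_0_lt_compat; lra).
  assert (Hb : b = / xi * (xi * b)) by (field; lra).
  apply Rmax_lub; [nra|]. rewrite Hb at 1. nra.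
Qed.

Theorem mainTheorem2 (X Y : MetricSpace) (U : X -> Prop) (V : Y -> Prop)
  (F : setmap X Y) (HU : is_open U) (HV : is_open V) (HF : graph_complete F) :
  (forall r, 0 < r ->
     (exists xi, 0 < xi /\
        forall x y v, U x -> V y -> F x v ->
          0 < mdist y v -> lt_rm U r x (mdist y v) ->
          exists u w, F u w /\ (u, w) <> (x, v) /\
            mdist y w <= mdist y v - r * dxi xi (x, v) (u, w)) ->
     milyutin_regular F U V /\ sur_m_ge F U V r)
  /\
  (milyutin_regular F U V ->
     forall r, 0 < r -> sur_m_gt F U V r ->
     forall xi, 0 < xi -> xi < / r ->
     forall x v y, U x -> F x v -> V y ->
       0 < mdist y v -> lt_rm U r x (mdist y v) ->
       exists u w, F u w /\ (u, w) <> (x, v) /\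
         mdist y w <= mdist y v - r * dxi xi (x, v) (u, w)).
Proof.
  split.
  - intros r rpos [xi [xipos Hsl]].
    assert (Hmod : milyutin_mod F U V r).
    { intros x Ux t t0 [s0 [ts0 Hs0]] y Vy [v [Fxv dyv]].
      assert (Dnn : forall p q : X * Y, 0 <= dxi xi p q).
      { intros p q; unfold dxi. pose proof (Rmax_l (mdist (fst p) (fst q)) (xi * mdist (snd p) (snd q))).
        pose proof (dist_nonneg _ (fst p) (fst q)); lra. }
      destruct (ekeland (X * Y) (fun p => F (fst p) (snd p)) (dxi xi)
                 (fun p => mdist y (snd p)) r (/ xi)) with (p0 := (x, v))
        as [[ub wb] [Fb [Hb1 Hb2]]]; simpl in *; auto.
      + intros [a b] [c d]; unfold dxi; simpl. rewrite (dist_sym _ a c), (dist_sym _ b d); reflexivity.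
      + intros [a b] [c d] [e g]; unfold dxi; simpl.
        pose proof (dist_tri _ a c e). pose proof (dist_tri _ b d g).
        pose proof (Rmax_l (mdist a c) (xi * mdist b d)). pose proof (Rmax_r (mdist a c) (xi * mdist b d)).
        pose proof (Rmax_l (mdist c e) (xi * mdist d g)). pose proof (Rmax_r (mdist c e) (xi * mdist d g)).
        apply Rmax_lub; nra.
      + intros [a b]; unfold dxi; simpl.
        rewrite (proj2 (dist_eq0 _ a a) eq_refl), (proj2 (dist_eq0 _ b b) eq_refl).
        rewrite Rmult_0_r; apply Rmax_left; lra.
      + intros [a b] [c d]; unfold dxi; simpl; intro H0.
        pose proof (Rmax_l (mdist a c) (xi * mdist b d)). pose proof (Rmax_r (mdist a c) (xi * mdist b d)).
        pose proof (dist_nonneg _ a c). pose proof (dist_nonneg _ b d).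
        assert (E1 : mdist a c = 0) by lra. assert (E2 : mdist b d = 0) by nra.
        apply dist_eq0 in E1; apply dist_eq0 in E2; subst; reflexivity.
      + intros s Fs Hcs.
        destruct (HF s Fs) as [p [Fp Hp]].
        { intros eps He.
          destruct (Hcs (eps / (1 + / xi))) as [N HN].
          { apply Rdiv_lt_0_compat; [lra|]. assert (0 < / xi) by (apply Rinv_0_lt_compat; lra). lra. }
          exists N; intros n m Hn Hm. specialize (HN n m Hn Hm).
          unfold dprod, dxi in *.
          pose proof (rmax_le_xi (mdist (fst (s n)) (fst (s m))) (mdist (snd (s n)) (snd (s m))) xi xipos
             (dist_nonneg _ _ _) (dist_nonneg _ _ _)).
          assert (0 < / xi) by (apply Rinv_0_lt_compat; lra).
          assert ((1 + / xi) * Rmax (mdist (fst (s n)) (fst (s m))) (xi * mdist (snd (s n)) (snd (s m))) <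
                  (1 + / xi) * (eps / (1 + / xi))) by (apply Rmult_lt_compat_l; lra).
          replace ((1 + / xi) * (eps / (1 + / xi))) with eps in H1 by (field; split; apply Rgt_not_eq; lra).
          lra. }
        exists p; split; auto.
        intros eps He. destruct (Hp (eps / (1 + xi))) as [N HN].
        { apply Rdiv_lt_0_compat; lra. }
        exists N; intros n Hn; specialize (HN n Hn). unfold dprod, dxi in *.
        pose proof (rmax_xi_le (mdist (fst (s n)) (fst p)) (mdist (snd (s n)) (snd p)) xi xipos
             (dist_nonneg _ _ _) (dist_nonneg _ _ _)).
        assert ((1 + xi) * Rmax (mdist (fst (s n)) (fst p)) (mdist (snd (s n)) (snd p)) <
                  (1 + xi) * (eps / (1 + xi))) by (apply Rmult_lt_compat_l; lra).
        replace ((1 + xi) * (eps / (1 + xi))) with eps in H0 by (field; apply Rgt_not_eq; lra).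
        lra.
      + intros p; apply dist_nonneg.
      + intros [a b] [c d]; unfold dxi; simpl.
        pose proof (dist_tri _ y b d).
        pose proof (Rmax_r (mdist a c) (xi * mdist b d)).
        assert (0 < / xi) by (apply Rinv_0_lt_compat; lra).
        assert (mdist b d = / xi * (xi * mdist b d)) by (field; lra).
        assert (/ xi * (xi * mdist b d) <= / xi * Rmax (mdist a c) (xi * mdist b d))
          by (apply Rmult_le_compat_l; lra).
        lra.
      + left; apply Rinv_0_lt_compat; lra.
      +
        pose proof (Dnn (x, v) (ub, wb)).
        assert (Hxu : mdist x ub <= dxi xi (x, v) (ub, wb)) by (unfold dxi; simpl; apply Rmax_l).
        pose proof (dist_nonneg _ y wb).
        assert (r * mdist x ub <= r * dxi xi (x, v) (ub, wb)) by (apply Rmult_le_compat_l; lra).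
        assert (Hxt : mdist x ub <= t).
        { apply Rmult_le_reg_l with r; lra. }
        destruct (classic (mdist y wb = 0)) as [Hz|Hz].
        * apply dist_eq0 in Hz; subst wb. exists ub; split; auto.
          rewrite dist_sym; exact Hxt.
        * exfalso.
          assert (Uub : U ub).
          { apply NNPP; intro Hn. specialize (Hs0 ub Hn). lra. }
          assert (Hrm : lt_rm U r ub (mdist y wb)).
          { exists (s0 - mdist x ub); split.
            - assert (r * t < r * s0) by (apply Rmult_lt_compat_l; lra). nra.
            - intros z Hz'. specialize (Hs0 z Hz'). pose proof (dist_tri _ x ub z). lra. }
          destruct (Hsl ub y wb Uub Vy Fb ltac:(lra) Hrm) as [u [w [Fuw [Hne Hd]]]].
          apply Hne. apply (Hb2 (u, w)); simpl; auto. lra. }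
    split; [exists r; split; auto|].
    right; intros r' Hr'; exists r; auto.
  - intros _ r rpos [Hr|[s [spos [Hmod rs]]]] xi xipos xir x v y Ux Fxv Vy dpos [s0 [Hs0 Hs0']];
      [lra|].
    set (t := mdist y v / s).
    assert (tnn : 0 <= t) by (unfold t; apply Rlt_le, Rdiv_lt_0_compat; lra).
    assert (st : s * t = mdist y v) by (unfold t; field; lra).
    assert (rt : r * t <= mdist y v) by (rewrite <- st; apply Rmult_le_compat_r; lra).
    assert (ts0 : t < s0).
    { apply Rmult_lt_reg_l with r; [lra|]. nra. }
    destruct (Hmod x Ux t tnn) with (y := y) as [u [Hut Fuy]]; auto.
    + exists s0; split; auto.
    + exists v; split; auto; lra.
    + exists u, y; split; auto; split.
      * intro Heq; injection Heq; intros; subst. rewrite (proj2 (dist_eq0 _ _ _) eq_refl) in dpos; lra.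
      * rewrite (proj2 (dist_eq0 _ y y) eq_refl). unfold dxi; simpl.
        apply Rmax_case_strong; intros _.
        -- rewrite (dist_sym _ x u). assert (r * mdist u x <= r * t) by (apply Rmult_le_compat_l; lra). lra.
        -- assert (xi * r < 1).
           { apply Rmult_lt_reg_l with (/ r); [apply Rinv_0_lt_compat; lra|].
             replace (/ r * (xi * r)) with xi by (field; lra). lra. }
           rewrite (dist_sym _ v y). pose proof (dist_nonneg _ y v). nra.
Qed.
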